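(* For every $x_G\in\mathcal{X}_G$, $$\underline{P}^{\mathrm{irr}}_G(x_G)=\prod_{s\in G}\underline{P}_{s\mid x_{P(s)}}(x_s)\quad\text{and}\quad\overline{P}^{\mathrm{irr}}_G(x_G)=\prod_{s\in G}\overline{P}_{s\mid x_{P(s)}}(x_s),$$ where $x_s$ and $x_{P(s)}$ are the restrictions of $x_G$.
   Context: Setting: $G$ is a finite set of nodes forming a DAG; node $s$ carries a variable $X_s$ with finite nonempty state space $\mathcal{X}_s$; $\mathcal{X}_S=\times_{s\in S}\mathcal{X}_s$. $P(s)$: parents; $D(s)$: the set of nodes reachable from $s$ by a directed path of positive length; $N(s)=G\setminus(\{s\}\cup D(s))$. Local models: for every $s$ and $x_{P(s)}$, $\mathcal{M}_{s\mid x_{P(s)}}$ is a nonempty closed convex set of probability mass functions on $\mathcal{X}_s$; local lower/upper probabilities are $\underline{P}_{s\mid x_{P(s)}}(x_s)=\min\{p(x_s):p\in\mathcal{M}_{s\mid x_{P(s)}}\}$ and $\overline{P}_{s\mid x_{P(s)}}(x_s)=\max\{p(x_s):p\in\mathcal{M}_{s\mid x_{P(s)}}\}$. Full conditional probability measure on finite $\Omega$: $(A,B)\mapsto P(A\mid B)$ ($B\ne\emptyset$), (F1) $P(\cdot\mid B)$ a probability measure with $P(B\mid B)=1$; (F2) $P(A\cap C\mid B)=P(A\mid C\cap B)P(C\mid B)$ if $C\cap B\ne\emptyset$. The event $x_S$ is $\{z_G:z_S=x_S\}$; $P(A)=P(A\mid\mathcal{X}_G)$. Irrelevant natural extension $\mathcal{F}^{\mathrm{irr}}_G$: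 all full conditional probability measures $P$ on $\mathcal{X}_G$ with $P(X_s\mid x_{N(s)})\in\mathcal{M}_{s\mid x_{P(s)}}$ for all $s,x_{N(s)}$. $\underline{P}^{\mathrm{irr}}_G(A)=\inf\{P(A):P\in\mathcal{F}^{\mathrm{irr}}_G\}$ and $\overline{P}^{\mathrm{irr}}_G(A)=\sup\{P(A):P\in\mathcal{F}^{\mathrm{irr}}_G\}$. *)

(* Defs.v *)
From mathcomp Require Import all_boot.
From Stdlib Require Import Reals.
Set Implicit Arguments. Unset Strict Implicit. Unset Printing Implicit Defensive.
Open Scope R_scope.

Definition edge (G : finType) (par : G -> {set G}) : rel G :=
  fun u v => u \in par v.

Definition desc (G : finType) (par : G -> {set G}) (s : G) : {set G} :=
  [set t | [exists u, edge par s u && connect (edge par) u t]].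

Definition acyclic (G : finType) (par : G -> {set G}) : Prop :=
  forall s, s \notin desc par s.

Definition nondesc (G : finType) (par : G -> {set G}) (s : G) : {set G} :=
  ~: (s |: desc par s).

Definition config (G : finType) (X : G -> finType) : finType :=
  {dffun forall s : G, X s}.

Definition agree_on (G : finType) (X : G -> finType) (S : {set G})
  (x y : config X) : Prop := forall t, t \in S -> x t = y t.

Definition ev (G : finType) (X : G -> finType) (S : {set G}) (x : config X)
  : {set config X} := [set z : config X | [forall t in S, z t == x t]].

Definition ev1 (G : finType) (X : G -> finType) (s : G) (xs : X s)
  : {set config X} := [set z : config X | z s == xs].

Definition is_pmf (T : finType) (p : T -> R) : Prop :=
  (forall t, 0 <= p t) /\ \big[Rplus/0]_(t : T) p t = 1.

Definition convex_set (T : finType) (M : (T -> R) -> Prop) : Prop :=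
  forall p q l, M p -> M q -> 0 <= l <= 1 ->
    M (fun t => l * p t + (1 - l) * q t).

(* Closed in R^T (finite dimensional, so pointwise convergence = Euclidean). *)
Definition closed_set (T : finType) (M : (T -> R) -> Prop) : Prop :=
  forall (u : nat -> T -> R) (p : T -> R),
    (forall n, M (u n)) -> (forall t, Un_cv (fun n => u n t) (p t)) -> M p.

Definition credal_set (T : finType) (M : (T -> R) -> Prop) : Prop :=
  (exists p, M p) /\ (forall p, M p -> is_pmf p) /\ convex_set M /\ closed_set M.

Definition full_cond_prob (O : finType) (P : {set O} -> {set O} -> R) : Prop :=
  (forall B : {set O}, B != set0 ->
     (forall A : {set O}, 0 <= P A B) /\ P setT B = 1 /\
     (forall A1 A2 : {set O}, [disjoint A1 & A2] -> P (A1 :|: A2) B = P A1 B + P A2 B) /\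
     P B B = 1) /\
  (forall A B C : {set O}, C :&: B != set0 -> P (A :&: C) B = P A (C :&: B) * P C B).

(* Membership in the irrelevant natural extension F^irr_G.
   The local model M s x depends only on x_{P(s)} (see mainTheorem12). *)
Definition irr_ext (G : finType) (X : G -> finType) (par : G -> {set G})
  (M : forall s : G, config X -> (X s -> R) -> Prop)
  (P : {set config X} -> {set config X} -> R) : Prop :=
  full_cond_prob P /\
  forall (s : G) (x : config X),
    M s x (fun xs : X s => P (ev1 xs) (ev (nondesc par s) x)).

Definition is_inf (E : R -> Prop) (m : R) : Prop :=
  (forall y, E y -> m <= y) /\ (forall b, (forall y, E y -> b <= y) -> b <= m).

Definition is_sup (E : R -> Prop) (m : R) : Prop :=
  (forall y, E y -> y <= m) /\ (forall b, (forall y, E y -> y <= b) -> m <= b).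

(* Main.v *)
Require Import Defs.
From mathcomp Require Import all_boot.
From Stdlib Require Import Reals Lra.
From mathcomp Require Import Rstruct.
Open Scope R_scope.
Set Implicit Arguments. Unset Strict Implicit. Unset Printing Implicit Defensive.

Section Graph.
Variable G : finType.
Variable par : G -> {set G}.
Hypothesis Hdag : acyclic par.

Lemma desc_child s u : s \in par u -> u \in desc par s.
Proof. by move=> h; rewrite inE; apply/existsP; exists u; rewrite /edge h connect0. Qed.

Lemma desc_sub a s : a \in desc par s -> desc par a \subset desc par s.
Proof.
rewrite inE => /existsP [w /andP [sw wa]].
apply/subsetP => t; rewrite !inE => /existsP [v /andP [av vt]].
apply/existsP; exists w; rewrite sw /=.
apply: connect_trans wa _; apply: connect_trans vt; exact: connect1.
Qed.

Lemma desc_closed s a b : a \in desc par s -> a \in par b -> b \in desc par s.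
Proof. by move=> ha hb; apply: (subsetP (desc_sub ha)); apply: desc_child. Qed.

Lemma desc1_closed s a b : a \in s |: desc par s -> a \in par b -> b \in s |: desc par s.
Proof.
rewrite !in_setU1 => /predU1P [-> | ha] hb; apply/orP; right.
  exact: desc_child.
exact: desc_closed ha hb.
Qed.

Lemma card_child s u : s \in par u -> (#|desc par u| < #|desc par s|)%nat.
Proof.
move=> h; apply: proper_card; apply/properP; split.
  exact: desc_sub (desc_child h).
by exists u; [exact: desc_child | exact: Hdag].
Qed.

Lemma notin_par s : s \notin par s.
Proof. by apply/negP => h; apply: (negP (Hdag s)); exact: desc_child. Qed.

Lemma anc_path (A : {set G}) :
  (forall t u, t \in A -> u \in par t -> u \in A) ->
  forall w t, connect (edge par) w t -> t \in A -> w \in A.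
Proof.
move=> hA w t /connectP [p pth ->]; elim: p w pth => //= v p IH w /andP [wv pth] hl.
exact: hA (IH v pth hl) wv.
Qed.

End Graph.

Section FCP.
Variable O : finType.
Variable P : {set O} -> {set O} -> R.
Hypothesis HP : full_cond_prob P.

Lemma fcp_ge0 (A B : {set O}) : B != set0 -> 0 <= P A B.
Proof. by move=> hB; case: (proj1 HP B hB) => h _; apply h. Qed.

Lemma fcp_BB (B : {set O}) : B != set0 -> P B B = 1.
Proof. by move=> hB; case: (proj1 HP B hB) => _ [_ [_ h]]. Qed.

Lemma fcp_add (A1 A2 B : {set O}) : B != set0 -> [disjoint A1 & A2] ->
  P (A1 :|: A2) B = P A1 B + P A2 B.
Proof. by move=> hB; case: (proj1 HP B hB) => _ [_ [h _]]; apply h. Qed.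

Lemma fcp_mul (A B C : {set O}) : C :&: B != set0 -> P (A :&: C) B = P A (C :&: B) * P C B.
Proof. exact: (proj2 HP). Qed.

Lemma fcp_0 (B : {set O}) : B != set0 -> P set0 B = 0.
Proof.
move=> hB; have := @fcp_add set0 set0 B hB; rewrite setU0 disjoints_subset sub0set => /(_ isT); lra.
Qed.

Lemma fcp_restr (A B : {set O}) : B != set0 -> P (A :&: B) B = P A B.
Proof. by move=> hB; rewrite fcp_mul setIid ?fcp_BB ?Rmult_1_r. Qed.

Lemma fcp_sum (B : {set O}) : B != set0 -> forall A : {set O},
  P A B = \big[Rplus/0]_(w in A :&: B) P [set w] B.
Proof.
move=> hB A; rewrite -fcp_restr //.
move: (A :&: B) => S.
elim: {S}_.+1 {-2}S (ltnSn #|S|) => // n IH S hS.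
case: (set_0Vmem S) => [->|[w wS]].
  by rewrite big_set0 fcp_0.
rewrite (big_setD1 w wS) /= -IH; last first.
  by rewrite (cardsD1 w S) wS add1n ltnS in hS.
rewrite -(@fcp_add [set w] (S :\ w) B hB); first by rewrite setD1K.
by rewrite disjoints1 in_setD1 eqxx.
Qed.


Lemma nset0 (A : {set O}) y : y \in A -> A != set0.
Proof. by move=> yA; apply/set0Pn; exists y. Qed.

Lemma fcp_convex (B E : {set O}) (cls : O -> {set O}) (l u : R) :
 B != set0 ->
 (forall y, y \in cls y) ->
 (forall y, y \in B -> cls y \subset B) ->
 (forall y w, w \in cls y -> cls w = cls y) ->
 (forall y, y \in B -> l <= P E (cls y) <= u) ->
 l <= P E B <= u.
Proof.
move=> hB hrefl hsub hsym hbd.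
have decomp y : y \in B -> P [set y] B = P [set y] (cls y) * P (cls y) B.
  move=> yB.
  have e1 : [set y] :&: cls y = [set y] by apply/setIidPl; rewrite sub1set.
  have e2 : cls y :&: B = cls y by apply/setIidPl; apply: hsub.
  by rewrite -{1}e1 fcp_mul e2 // (nset0 (hrefl y)).
have key : P E B = \big[Rplus/0]_(y in B) (P [set y] B * P E (cls y)).
  rewrite (fcp_sum hB E).
  transitivity (\big[Rplus/0]_(w in E :&: B)
     \big[Rplus/0]_(y in cls w :&: cls w) (P [set y] (cls w) * P [set w] B)).
    apply: eq_bigr => w /setIP [wE wB].
    by rewrite -big_distrl /= -fcp_sum ?fcp_BB ?Rmult_1_l // (nset0 (hrefl w)).
  transitivity (\big[Rplus/0]_(y in B)
     \big[Rplus/0]_(w in E :&: cls y) (P [set y] (cls w) * P [set w] B)); last first.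
    apply: eq_bigr => y yB.
    rewrite (fcp_sum (nset0 (hrefl y)) E) big_distrr /=.
    apply: eq_bigr => w /setIP [wE wy].
    have wB : w \in B by apply: (subsetP (hsub y yB)).
    rewrite (decomp y yB) (decomp w wB) (hsym y w wy); ring.
  rewrite [RHS](exchange_big_dep (fun w => w \in E :&: B)) /=; last first.
    move=> y w yB /setIP [wE wy]; rewrite inE wE /=.
    exact: (subsetP (hsub y yB)).
  apply: eq_bigr => w /setIP [wE wB].
  apply: eq_bigl => y; rewrite setIid in_setI wE /=.
  apply/idP/idP.
    move=> yw; have -> : y \in B by apply: (subsetP (hsub w wB)).
    by rewrite /= (hsym w y yw) hrefl.
  by case/andP => yB wy; rewrite (hsym y w wy).
have tot : \big[Rplus/0]_(y in B) P [set y] B = 1.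
  by rewrite -(fcp_BB hB) (fcp_sum hB B); apply: eq_bigl => y; rewrite setIid.
rewrite key; split.
  apply: (@Rle_trans _ (\big[Rplus/0]_(y in B) (P [set y] B * l))).
    by rewrite -big_distrl /= tot Rmult_1_l; apply: Rle_refl.
  apply: (big_ind2 (fun a b => a <= b)); first by apply: Rle_refl.
    by move=> *; apply: Rplus_le_compat.
  move=> y yB; apply: Rmult_le_compat_l; first exact: fcp_ge0.
  by case: (hbd y yB).
apply: (@Rle_trans _ (\big[Rplus/0]_(y in B) (P [set y] B * u))).
  apply: (big_ind2 (fun a b => a <= b)); first by apply: Rle_refl.
    by move=> *; apply: Rplus_le_compat.
  move=> y yB; apply: Rmult_le_compat_l; first exact: fcp_ge0.
  by case: (hbd y yB).
by rewrite -big_distrl /= tot Rmult_1_l; apply: Rle_refl.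
Qed.

End FCP.

Lemma prod_ge0 (I : finType) (A : pred I) (F : I -> R) :
  (forall i, 0 <= F i) -> 0 <= \big[Rmult/1]_(i in A) F i.
Proof.
move=> h; apply: (big_ind (fun a => 0 <= a)); first lra.
  by move=> a b ha hb; apply: Rmult_le_pos.
by move=> i _; apply: h.
Qed.

Section Chain.
Variables (G : finType) (X : G -> finType) (par : G -> {set G}).
Hypothesis Hdag : acyclic par.
Variable P : {set config X} -> {set config X} -> R.
Hypothesis HP : full_cond_prob P.
Variable x : config X.
Variables L U : G -> R.
Hypothesis HL0 : forall s, 0 <= L s.
Hypothesis HLU : forall s (z : config X), agree_on (par s) z x ->
  L s <= P (ev1 (x s)) (ev (nondesc par s) z) <= U s.

Lemma evP (S : {set G}) (y z : config X) :
  reflect (forall t, t \in S -> y t = z t) (y \in ev S z).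
Proof. rewrite inE; apply: (iffP forall_inP) => h t tS; [exact/eqP/h | exact/eqP/h]. Qed.

Lemma chain n : forall A : {set G}, #|A| = n ->
  (forall t u, t \in A -> u \in par t -> u \in A) ->
  \big[Rmult/1]_(t in A) L t <= P (ev A x) setT <= \big[Rmult/1]_(t in A) U t.
Proof.
have xT : (setT : {set config X}) != set0 by apply: (nset0 (in_setT x)).
elim: n => [|n IH] A hc hA.
  move/eqP: hc; rewrite cards_eq0 => /eqP ->.
  have -> : ev set0 x = setT by apply/setP => y; rewrite in_setT; apply/evP => t; rewrite in_set0.
  by rewrite !big_set0 fcp_BB //; lra.
have [a aA] : exists a, a \in A.
  by apply/set0Pn; rewrite -cards_eq0 hc.
case: (arg_minnP (fun t => #|desc par t|) aA) => s sA smin.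
have {}sA : s \in A by [].
have {}smin : forall w, w \in A -> (#|desc par s| <= #|desc par w|)%nat by [].

set A' := A :\ s.
have hc' : #|A'| = n by move: hc; rewrite (cardsD1 s A) sA add1n => -[].
have nochild w : w \in A -> s \in par w -> False.
  move=> wA sw; have := card_child Hdag sw; have := smin w wA.
  by move=> h1 h2; move: (leq_trans h2 h1); rewrite ltnn.
have hA' : forall t u, t \in A' -> u \in par t -> u \in A'.
  move=> t u; rewrite !in_setD1 => /andP [ts tA] ut.
  rewrite (hA t u tA ut) andbT; apply/eqP => us; subst u; exact: nochild tA ut.
have A'N : A' \subset nondesc par s.
  apply/subsetP => t; rewrite in_setD1 => /andP [ts tA].
  rewrite inE in_setU1 negb_or ts /=; apply/negP.
  rewrite inE => /existsP [w /andP [sw wt]].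
  exact: (nochild w (anc_path hA wt tA) sw).
have parA' : par s \subset A'.
  apply/subsetP => u us; rewrite in_setD1 (hA s u sA us) andbT.
  by apply/eqP => e; subst u; move: (notin_par Hdag s); rewrite us.
have eA : ev A x = ev1 (x s) :&: ev A' x.
  apply/setP => y; rewrite in_setI [y \in ev1 _]inE.
  apply/evP/andP.
    move=> h; split; first by apply/eqP; apply: h.
    by apply/evP => t; rewrite in_setD1 => /andP [_ tA]; apply: h.
  move=> [/eqP ys /evP h] t tA; case: (eqVneq t s) => [->//|ts].
  by apply: h; rewrite in_setD1 ts.
have xA' : x \in ev A' x by apply/evP.
rewrite eA fcp_mul; last by rewrite setIT (nset0 xA').
rewrite setIT (big_setD1 s sA) [X in _ <= X]/= (big_setD1 s sA) /=.
have [IH1 IH2] := IH A' hc' hA'.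
have [C1 C2] : L s <= P (ev1 (x s)) (ev A' x) <= U s.
  apply: (fcp_convex HP (cls := fun y => ev (nondesc par s) y)) => //.
  - exact: nset0 xA'.
  - by move=> y; apply/evP.
  - move=> y /evP yA; apply/subsetP => w /evP wy; apply/evP => t tA.
    by rewrite wy ?yA // (subsetP A'N).
  - move=> y w /evP wy; apply/setP => v; apply/evP/evP => h t tN.
      by rewrite h // wy.
    by rewrite h // wy.
  - move=> y /evP yA; apply: HLU => t tp; apply: yA; exact: (subsetP parA').
split.
  apply: Rmult_le_compat => //; first exact: prod_ge0.
apply: Rmult_le_compat => //; first exact: (fcp_ge0 HP _ (nset0 xA')).
exact: (fcp_ge0 HP _ xT).
exact: HP.
Qed.

End Chain.
Lemma sum_ge0 (I : finType) (A : pred I) (F : I -> R) :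
  (forall i, A i -> 0 <= F i) -> 0 <= \big[Rplus/0]_(i in A) F i.
Proof.
move=> h; apply: (big_ind (fun a => 0 <= a)); first lra.
  by move=> a b ha hb; lra.
by move=> i /h.
Qed.

Lemma sum_gt0 (I : finType) (A : {set I}) (F : I -> R) :
  A != set0 -> (forall i, 0 < F i) -> 0 < \big[Rplus/0]_(i in A) F i.
Proof.
case/set0Pn => a aA h; rewrite (bigD1 a aA) /=.
apply: Rplus_lt_le_0_compat => //.
by apply: sum_ge0 => i _; apply: Rlt_le.
Qed.

Section Rank.
Variable O : finType.
Variables (c : O -> R) (k : O -> nat).
Hypothesis cpos : forall y, 0 < c y.

Definition Kmax := (\max_(y : O) k y)%nat.
Definition mB (B : {set O}) : nat := (Kmax - \max_(y in B) (Kmax - k y))%nat.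
Definition lay (B : {set O}) : {set O} := [set y in B | k y == mB B].
Definition Pc (A B : {set O}) : R :=
  (\big[Rplus/0]_(y in A :&: lay B) c y) / (\big[Rplus/0]_(y in lay B) c y).

Lemma kmax y : (k y <= Kmax)%nat.
Proof. by apply: (@leq_bigmax_cond _ predT). Qed.

Lemma m1 (B : {set O}) y : y \in B -> (mB B <= k y)%nat.
Proof.
move=> yB; rewrite /mB -(subKn (kmax y)); apply: leq_sub2l.
exact: (@leq_bigmax_cond _ (mem B) (fun y => Kmax - k y)%nat).
Qed.

Lemma m2 (B : {set O}) : B != set0 -> exists2 y, y \in B & k y = mB B.
Proof.
move=> hB; have : (0 < #|B|)%nat by rewrite card_gt0.
case/(@eq_bigmax_cond _ (mem B) (fun y => Kmax - k y)%nat) => y yB e.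
by exists y => //; rewrite /mB e subKn // kmax.
Qed.

Lemma lay_sub (B : {set O}) : lay B \subset B.
Proof. by apply/subsetP => y; rewrite inE => /andP []. Qed.

Lemma lay_n0 (B : {set O}) : B != set0 -> lay B != set0.
Proof. by case/m2 => y yB e; apply/set0Pn; exists y; rewrite inE yB e eqxx. Qed.

Lemma Pc_fcp : full_cond_prob Pc.
Proof.
split.
  move=> B hB; have dpos := sum_gt0 (lay_n0 hB) cpos.
  split; [|split; [|split]].
  - move=> A; rewrite /Pc /Rdiv; apply: Rmult_le_pos.
      by apply: sum_ge0 => i _; apply: Rlt_le.
    by apply: Rlt_le; apply: Rinv_0_lt_compat.
  - by rewrite /Pc setTI /Rdiv Rinv_r //; apply: Rgt_not_eq.
  - move=> A1 A2 dis; rewrite /Pc setIUl.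
    rewrite (@eq_bigl _ _ _ _ _ _ [predU (A1 :&: lay B) & (A2 :&: lay B)]); last first.
      by move=> y; rewrite in_setU.
    rewrite bigU /=; first by rewrite /Rdiv Rmult_plus_distr_r.
    by apply: (disjointWl (subsetIl _ _)); apply: (disjointWr (subsetIl _ _)).
  - by rewrite /Pc (setIidPr (lay_sub B)) /Rdiv Rinv_r //; apply: Rgt_not_eq.
move=> A B C hCB.
have hB : B != set0.
  by apply: contraNneq hCB => ->; rewrite setI0.
have dpos := sum_gt0 (lay_n0 hB) cpos.
case: (eqVneq (mB (C :&: B)) (mB B)) => e.
  have eL : lay (C :&: B) = C :&: lay B.
    by apply/setP => y; rewrite !inE e andbA.
  have cpos' := sum_gt0 (lay_n0 hCB) cpos.
  rewrite /Pc eL -setIA; rewrite eL in cpos'.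
  field; split; apply: Rgt_not_eq => //.
have e0 : C :&: lay B = set0.
  apply/setP => y; rewrite !inE; apply/negbTE/negP => /and3P [yC yB /eqP ky].
  case: (m2 hCB) => z /[dup] zCB; rewrite inE => /andP [_ zB] kz.
  have h1 : (mB (C :&: B) <= k y)%nat by apply: m1; rewrite inE yC yB.
  have h2 := m1 zB.
  move/eqP: e; apply; apply/anti_leq/andP; split; [by rewrite -ky | by rewrite -kz].
have e1 : A :&: C :&: lay B = set0 by rewrite -setIA e0 setI0.
by rewrite /Pc e0 e1 !big_set0 /Rdiv !Rmult_0_l Rmult_0_r.
Qed.

End Rank.

Section BN.
Variables (G : finType) (X : G -> finType) (par : G -> {set G}).
Hypothesis Hdag : acyclic par.
Unset Implicit Arguments.
Variable pf : forall t : G, config X -> X t -> R.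
Set Implicit Arguments.
Hypothesis pf_pmf : forall (t : G) (y : config X), is_pmf (pf t y).
Hypothesis pf_loc : forall (t : G) (y y' : config X), agree_on (par t) y y' -> pf t y = pf t y'.

Definition fv (t : G) (y : config X) : R := pf t y (y t).
Definition agr (S : {set G}) (z : config X) := ev (~: S) z.
Definition upd (z : config X) t (b : X t) : config X := finfun (dfwith (fun u => z u) b).
Definition dclosed (S : {set G}) := forall a b, a \in S -> a \in par b -> b \in S.

Lemma fv_ge0 (t : G) (y : config X) : 0 <= fv t y.
Proof. by case: (pf_pmf t y) => h _; apply: h. Qed.

Lemma upd_agr (S : {set G}) z t (b : X t) y : t \in S ->
  (y \in agr (S :\ t) (upd z b)) = (y \in agr S z) && (y t == b).
Proof.
move=> tS; apply/evP/andP.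
  move=> h; split.
    apply/evP => u; rewrite inE => uS; rewrite h ?ffunE.
      by rewrite dfwith_out //; apply: contraNneq uS => <-.
    by rewrite !inE negb_and uS orbT.
  by rewrite h ?ffunE ?dfwith_in // !inE eqxx.
move=> [/evP h /eqP yt] u; rewrite !inE negb_and negbK => /orP [/eqP -> | uS].
  by rewrite ffunE dfwith_in.
rewrite ffunE dfwith_out; first by apply: h; rewrite inE.
by apply: contraNneq uS => <-.
Qed.

Lemma loc_agr (S : {set G}) z y t : dclosed S -> t \notin S -> y \in agr S z ->
  pf t y = pf t z.
Proof.
move=> hS tS /evP yz; apply: pf_loc => u ut; apply: yz; rewrite inE.
by apply: contraNN tS => uS; apply: hS uS ut.
Qed.

Lemma norm n : forall (S : {set G}) z, #|S| = n -> dclosed S ->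
  \big[Rplus/0]_(y in agr S z) \big[Rmult/1]_(t in S) fv t y = 1.
Proof.
elim: n => [|n IH] S z hc hS.
  move/eqP: hc; rewrite cards_eq0 => /eqP ->.
  have -> : agr set0 z = [set z].
    apply/setP => y; rewrite inE; apply/evP/eqP.
      by move=> h; apply/ffunP => t; apply: h; rewrite inE in_set0.
    by move=> ->.
  by rewrite big_set1 big_set0.
have [a aS] : exists a, a \in S.
  by apply/set0Pn; rewrite -cards_eq0 hc.
case: (arg_maxnP (fun t => #|desc par t|) aS) => t tS tmax.
have {}tS : t \in S by [].
have {}tmax : forall w, w \in S -> (#|desc par w| <= #|desc par t|)%nat by [].
have nopar u : u \in S -> u \in par t -> False.
  move=> uS ut; have := card_child Hdag ut; have := tmax u uS.
  by move=> h1 h2; move: (leq_trans h2 h1); rewrite ltnn.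
have hc' : #|S :\ t| = n by move: hc; rewrite (cardsD1 t S) tS add1n => -[].
have hS' : dclosed (S :\ t).
  move=> u v; rewrite !in_setD1 => /andP [ut uS] uv.
  rewrite (hS u v uS uv) andbT; apply/eqP => e; subst v; exact: nopar uS uv.
have tout : dclosed (~: (~: S)) by rewrite setCK.
transitivity (\big[Rplus/0]_(y in agr S z)
    (pf t z (y t) * \big[Rmult/1]_(u in S :\ t) fv u y)).
  apply: eq_bigr => y yA; rewrite (big_setD1 t tS) /=; congr (_ * _).
  rewrite /fv; have -> // : pf t y = pf t z.
  apply: pf_loc => u ut.
  by move/evP: yA; apply; rewrite inE; apply/negP => uS; apply: (nopar u uS ut).
rewrite (partition_big (fun y : config X => y t) predT) //=.
transitivity (\big[Rplus/0]_(b : X t) (pf t z b * 1)).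
  apply: eq_bigr => b _.
  transitivity (pf t z b * \big[Rplus/0]_(y in agr (S :\ t) (upd z b))
                 \big[Rmult/1]_(u in S :\ t) fv u y); last by rewrite IH.
  rewrite big_distrr /=.
  apply: eq_big => y; first by rewrite upd_agr.
  by move=> /andP [_ /eqP ->].
case: (pf_pmf t z) => _ h; rewrite -[RHS]h; apply: eq_bigr => b _; exact: Rmult_1_r.
Qed.

Definition kk (y : config X) : nat := \big[addn/0%nat]_(t : G) nat_of_bool (fv t y == 0).
Definition cc (y : config X) : R :=
  \big[Rmult/1]_(t : G) (if fv t y == 0 then 1 else fv t y).

Lemma factor_pos t y : 0 < (if fv t y == 0 then 1 else fv t y).
Proof.
case: eqP => h; first lra.
by case: (Rle_lt_or_eq_dec _ _ (fv_ge0 t y)) => // e; case: h.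
Qed.

Lemma prod_pos (A : pred G) (F : G -> R) :
  (forall t, 0 < F t) -> 0 < \big[Rmult/1]_(t in A) F t.
Proof.
move=> h; apply: (big_ind (fun a => 0 < a)); first lra.
  by move=> a b ha hb; apply: Rmult_lt_0_compat.
by move=> i _; apply: h.
Qed.

Lemma cc_pos y : 0 < cc y.
Proof.
rewrite /cc; apply: (big_ind (fun a => 0 < a)); first lra.
  by move=> a b ha hb; apply: Rmult_lt_0_compat.
by move=> i _; apply: factor_pos.
Qed.

Definition PB := Pc cc kk.

Lemma PB_fcp : full_cond_prob PB.
Proof. exact: Pc_fcp cc_pos. Qed.

Lemma PB_irr s z (a : X s) : PB (ev1 a) (ev (nondesc par s) z) = pf s z a.
Proof.
set S := s |: desc par s.
have hS : dclosed S by move=> u v; apply: desc1_closed.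
have hD : dclosed (desc par s) by move=> u v; apply: desc_closed.
have -> : ev (nondesc par s) z = agr S z by [].
set B := agr S z.
set Q := fun y => \big[Rmult/1]_(t in S) fv t y.
have sumQ : \big[Rplus/0]_(y in B) Q y = 1 by apply: (@norm #|S| S z (erefl _) hS).
have outeq y t : y \in B -> t \notin S -> fv t y = fv t z.
  move=> yB tS; rewrite /fv (loc_agr hS tS yB); congr (pf t z _).
  by move/evP: yB; apply; rewrite inE.
set kout := \big[addn/0%nat]_(t | t \notin S) nat_of_bool (fv t z == 0).
set kin := fun y => \big[addn/0%nat]_(t | t \in S) nat_of_bool (fv t y == 0).
have ksplit y : y \in B -> kk y = (kout + kin y)%nat.
  move=> yB; rewrite /kk (bigID (mem S)) /= addnC; congr addn.
  by apply: eq_bigr => t tS; rewrite (outeq y t yB tS).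
set cout := \big[Rmult/1]_(t | t \notin S) (if fv t z == 0 then 1 else fv t z).
set cin := fun y => \big[Rmult/1]_(t | t \in S) (if fv t y == 0 then 1 else fv t y).
have csplit y : y \in B -> cc y = cout * cin y.
  move=> yB; rewrite /cc (bigID (mem S)) /= Rmult_comm; congr Rmult.
  by apply: eq_bigr => t tS; rewrite (outeq y t yB tS).
have coutpos : 0 < cout by apply: prod_pos => t; apply: factor_pos.
have kinQ y : (kin y == 0)%nat = (Q y != 0).
  rewrite /kin sum_nat_eq0; apply/forall_inP/idP.
    move=> h; rewrite /Q; apply/eqP.
    apply: (big_ind (fun a => a <> 0)); first exact: R1_neq_R0.
      by move=> u v hu hv; apply: Rmult_integral_contrapositive.
    by move=> t tS e; move: (h t tS); rewrite e eqxx.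
  move=> hQ t tS; apply/eqP; case: (eqVneq (fv t y) 0) => [e|//]; move: hQ.
  by rewrite /Q (bigD1 t tS) /= e Rmult_0_l eqxx.
have [y0 y0B Qy0] : exists2 y, y \in B & Q y != 0.
  case: (boolP [exists y in B, Q y != 0]) => [/exists_inP [y yB h]|h].
    by exists y.
  move: sumQ; rewrite big1 => [|y yB]; first lra.
  by apply/eqP; apply: contraNT h => hy; apply/exists_inP; exists y.
have mBeq : mB kk B = kout.
  have k0 : kk y0 = kout by rewrite ksplit // (eqP (etrans (kinQ y0) Qy0)) addn0.
  apply/anti_leq/andP; split; first by rewrite -k0; apply: m1.
  case: (m2 kk (nset0 y0B)) => y1 y1B <-; rewrite ksplit //; apply: leq_addr.
have layQ y : (y \in lay kk B) = (y \in B) && (Q y != 0).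
  rewrite inE mBeq; case yB : (y \in B) => //=.
  by rewrite ksplit // -{2}[kout]addn0 eqn_add2l kinQ.
have numer (E : {set config X}) : \big[Rplus/0]_(y in E :&: lay kk B) cc y =
    cout * \big[Rplus/0]_(y in E :&: B) Q y.
  rewrite (bigID (fun y => Q y != 0) (mem (E :&: B))) /=.
  rewrite [X in _ + X]big1 => [|y /andP [_ /negPn /eqP] //].
  rewrite Rplus_0_r big_distrr /=; apply: eq_big => y.
    by rewrite !in_setI layQ andbA.
  rewrite in_setI layQ => /andP [_ /andP [yB hQ]].
  rewrite csplit //; congr (_ * _); apply: eq_bigr => t tS.
  by case: eqP => // e; move: hQ; rewrite /Q (bigD1 t tS) /= e Rmult_0_l eqxx.
have eS : S :\ s = desc par s by rewrite setU1K.
have sS : s \in S by rewrite /S in_setU1 eqxx.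
have Na : \big[Rplus/0]_(y in ev1 a :&: B) Q y = pf s z a.
  transitivity (\big[Rplus/0]_(y in agr (S :\ s) (upd z a))
                 (pf s z a * \big[Rmult/1]_(t in S :\ s) fv t y)).
    apply: eq_big => y; first by rewrite upd_agr // in_setI andbC [y \in ev1 a]inE.
    rewrite in_setI [y \in ev1 a]inE andbC // => /andP [yB /eqP ys].
    rewrite /Q (big_setD1 s sS) /=; congr (_ * _).
    rewrite /fv ys; have -> // : pf s y = pf s z.
    apply: pf_loc => u us; move/evP: yB; apply; rewrite inE.
    rewrite /S in_setU1 negb_or; apply/andP; split.
      by apply/eqP => e; subst u; move: (notin_par Hdag s); rewrite us.
    by apply/negP => ud; apply: (negP (Hdag s)); apply: desc_closed ud us.
  rewrite -big_distrr /= eS (@norm _ _ (upd z a) (erefl _) hD) Rmult_1_r //.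
rewrite /PB /Pc numer -[lay kk B]setTI numer setTI sumQ Na.
field; lra.
Qed.

End BN.

From Stdlib Require Import ClassicalEpsilon FunctionalExtensionality.

Section Final.
Unset Implicit Arguments.
Variables (G : finType) (X : G -> finType) (par : G -> {set G}).
Hypothesis Hdag : acyclic par.
Variable M : forall s : G, config X -> (X s -> R) -> Prop.
Hypothesis Hloc : forall (s : G) (x y : config X), agree_on (par s) x y ->
            forall p, M s x p <-> M s y p.
Hypothesis Hcred : forall (s : G) (x : config X), credal_set (M s x).
Variable x : config X.
Set Implicit Arguments.

Lemma setT_prod (F : G -> R) :
  \big[Rmult/1]_(t in [set: G]) F t = \big[Rmult/1]_(t : G) F t.
Proof. by apply: eq_bigl => t; rewrite in_setT. Qed.

Lemma bounds_all (P : {set config X} -> {set config X} -> R) (L U : G -> R) :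
  irr_ext par M P ->
  (forall s, 0 <= L s) ->
  (forall s p, M s x p -> L s <= p (x s) <= U s) ->
  \big[Rmult/1]_(t : G) L t <= P (ev setT x) setT <= \big[Rmult/1]_(t : G) U t.
Proof.
move=> [HP Hirr] HL0 HB.
have HLU : forall s (z : config X), agree_on (par s) z x ->
    L s <= P (ev1 (x s)) (ev (nondesc par s) z) <= U s.
  move=> s z hz; apply: (HB s (fun xs => P (ev1 xs) (ev (nondesc par s) z))).
  apply/(Hloc s z x hz); exact: Hirr.
have := @chain _ _ par Hdag P HP x L U HL0 HLU _ [set: G] (erefl _).
by rewrite -!setT_prod; apply.
Qed.

Lemma attain (q : forall s, X s -> R) : (forall s, M s x (q s)) ->
  exists P, irr_ext par M P /\ P (ev setT x) setT = \big[Rmult/1]_(t : G) q t (x t).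
Proof.
move=> hq.
have defp : forall s w, {p | M s w p}.
  by move=> s w; apply: constructive_indefinite_description; case: (Hcred s w).
pose pick s (w : config X) := if w == x then q s else proj1_sig (defp s w).
have pickM s w : M s w (pick s w).
  rewrite /pick; case: eqP => [->|_]; [exact: hq | exact: proj2_sig].
pose proj s (y : config X) : config X :=
  finfun (fun u => if u \in par s then y u else x u).
pose pf s y := pick s (proj s y).
have projA s y : agree_on (par s) (proj s y) y.
  by move=> u us; rewrite ffunE us.
have pfM s y : M s y (pf s y).
  by apply/(Hloc s (proj s y) y (projA s y)); apply: pickM.
have pf_pmf s y : is_pmf (pf s y).
  by case: (Hcred s y) => _ [h _]; apply: h.
have pf_loc s y y' : agree_on (par s) y y' -> pf s y = pf s y'.
  move=> h; rewrite /pf; congr (pick s _); apply/ffunP => u; rewrite !ffunE.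
  by case: ifP => // us; apply: h.
have pfx s z : agree_on (par s) z x -> pf s z = q s.
  move=> h; rewrite /pf /pick.
  have -> : proj s z = x.
    apply/ffunP => u; rewrite ffunE; case: ifP => // us; exact: h.
  by rewrite eqxx.
exists (PB pf); have HP := PB_fcp pf_pmf.
have irr : irr_ext par M (PB pf).
  split => // s z.
  have -> : (fun xs : X s => PB pf (ev1 xs) (ev (nondesc par s) z)) = pf s z.
    by apply: functional_extensionality => a; apply: PB_irr.
  exact: pfM.
split => //.
have q0 s : 0 <= q s (x s).
  by case: (Hcred s x) => _ [h _]; case: (h _ (hq s)) => h0 _; apply: h0.
have := @chain _ _ par Hdag (PB pf) HP x (fun s => q s (x s)) (fun s => q s (x s)) q0.
case/(_ _ #|[set: G]| [set: G] (erefl _) _) => //.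
  move=> s z hz; rewrite PB_irr // pfx //; lra.
rewrite !setT_prod => h1 h2; lra.
Qed.

End Final.

Theorem mainTheorem12
  (G : finType) (X : G -> finType) (par : G -> {set G})
  (Hdag : acyclic par)
  (Hne : forall s : G, (0 < #|X s|)%nat)
  (M : forall s : G, config X -> (X s -> R) -> Prop)
  (Hloc : forall (s : G) (x y : config X), agree_on (par s) x y ->
            forall p, M s x p <-> M s y p)
  (Hcred : forall (s : G) (x : config X), credal_set (M s x))
  (lowP upP : forall s : G, config X -> X s -> R)
  (Hlow : forall (s : G) (x : config X) (xs : X s),
      (exists p, M s x p /\ p xs = lowP s x xs) /\
      (forall p, M s x p -> lowP s x xs <= p xs))
  (Hup : forall (s : G) (x : config X) (xs : X s),
      (exists p, M s x p /\ p xs = upP s x xs) /\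
      (forall p, M s x p -> p xs <= upP s x xs)) :
  forall x : config X,
    is_inf (fun v => exists P, irr_ext par M P /\ v = P (ev setT x) setT)
           (\big[Rmult/1]_(s : G) lowP s x (x s)) /\
    is_sup (fun v => exists P, irr_ext par M P /\ v = P (ev setT x) setT)
           (\big[Rmult/1]_(s : G) upP s x (x s)).
Proof.
move=> x.
have L0 s : 0 <= lowP s x (x s).
  case: (Hlow s x (x s)) => [[p [hp <-]] _].
  by case: (Hcred s x) => _ [h _]; case: (h _ hp) => h0 _; apply: h0.
have HB s p : M s x p -> lowP s x (x s) <= p (x s) <= upP s x (x s).
  move=> hp; split; [exact: (proj2 (Hlow s x (x s)) p hp) | exact: (proj2 (Hup s x (x s)) p hp)].
have pick (F : forall s, config X -> X s -> R) :
  (forall s, exists p, M s x p /\ p (x s) = F s x (x s)) ->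
  exists P, irr_ext par M P /\ P (ev setT x) setT = \big[Rmult/1]_(s : G) F s x (x s).
  move=> hF.
  have defp : forall s, {p | M s x p /\ p (x s) = F s x (x s)}.
    by move=> s; apply: constructive_indefinite_description.
  case: (@attain _ _ par Hdag M Hloc Hcred x (fun s => proj1_sig (defp s))).
    by move=> s; case: (proj2_sig (defp s)).
  move=> P [hP e]; exists P; split => //; rewrite e; apply: eq_bigr => s _.
  by case: (proj2_sig (defp s)).
split; split.
- by move=> v [P [hP ->]]; case: (bounds_all Hdag Hloc hP L0 HB).
- move=> b hb; case: (pick lowP) => [s|P [hP e]]; first by case: (Hlow s x (x s)).
  by rewrite -e; apply: hb; exists P.
- by move=> v [P [hP ->]]; case: (bounds_all Hdag Hloc hP L0 HB).
- move=> b hb; case: (pick upP) => [s|P [hP e]]; first by case: (Hup s x (x s)).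
  by rewrite -e; apply: hb; exists P.
Qed.
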